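(* Let $k\in\mathbb{N}$ and let $M_\psi$ be a bounded multiplication operator on $\mathcal{L}^{(k)}$ or on $\mathcal{L}^{(k)}_0$. Then $M_\psi$ is bounded below if and only if $\inf_{v\in T}|\psi(v)|>0$.
   Context: $T$ is a tree (locally finite, connected, simply connected graph, identified with its vertex set) without terminal vertices, rooted at $o$. $|v|$ is the distance from $o$ to $v$; for $v\ne o$, $v^-$ is the parent of $v$. $T^*=T\setminus\{o\}$, $Df(v)=|f(v)-f(v^-)|$. For $x\ge1$: $\ell_0(x)=1$, $\ell_1(x)=1+\ln x$, $\ell_j(x)=1+\ln\ell_{j-1}(x)$ for $j\ge2$. $\mathcal{L}^{(k)}$ is the space of $f:T\to\mathbb{C}$ with $\sup_{v\in T^*}|v|\prod_{j=0}^{k-1}\ell_j(|v|)Df(v)<\infty$, normed by $\|f\|_k=|f(o)|+\sup_{v\in T^*}|v|\prod_{j=0}^{k-1}\ell_j(|v|)Df(v)$; $\mathcal{L}^{(k)}_0$ is its subspace of $f$ with $|v|\prod_{j=0}^{k-1}\ell_j(|v|)Df(v)\to0$ as $|v|\to\infty$. $M_\psi f=\psi f$. An operator $S$ on a Banach space $X$ is bounded below if there is $c>0$ with $\|Sx\|\ge c\|x\|$ for all $x\in X$. *)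

(* Defs.v *)
From mathcomp Require Import all_boot all_order all_algebra.
From mathcomp Require Import all_classical all_reals all_analysis.
From mathcomp.real_closed Require Import complex.
Set Implicit Arguments. Unset Strict Implicit. Unset Printing Implicit Defensive.
Import Order.TTheory GRing.Theory Num.Theory.
Local Open Scope classical_set_scope.
Local Open Scope ring_scope.

(* A rooted tree, given by its vertex set [vert], root [root], parent map
   [par] (v^- for v <> root) and depth [depth] (= |v|, distance to the root).
   The edges of the underlying graph are the pairs {v, par v}, v <> root. *)
Record rtree := RTree {
  vert :> Type;
  root : vert;
  par : vert -> vert;
  depth : vert -> nat;
  depth_root : depth root = 0%N;
  depth_par : forall v, v <> root -> (depth (par v)).+1 = depth v;
  depth0 : forall v, depth v = 0%N -> v = root;
  locfin : forall v : vert,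
    finite_set [set w | (w <> root /\ par w = v) \/ (v <> root /\ w = par v)];
  (* no terminal vertices: no vertex has exactly one neighbour *)
  noterm : forall v : vert,
    ~ exists w, [set u | (u <> root /\ par u = v) \/ (v <> root /\ u = par v)]
                = [set w]
}.

Section Spaces.
Variables (R : realType) (T : rtree).

Definition Tstar : set T := [set v | v <> root T].

Fixpoint ell (j : nat) (x : R) : R :=
  match j with
  | 0%N => 1
  | 1%N => 1 + ln x
  | j'.+1 => 1 + ln (ell j' x)
  end.

Definition weight (k : nat) (v : T) : R :=
  (depth v)%:R * \prod_(j < k) ell j (depth v)%:R.

Definition Df (f : T -> R[i]) (v : T) : R := Normc.normc (f v - f (par v)).

Definition wDf (k : nat) (f : T -> R[i]) : set R :=
  [set weight k v * Df f v | v in Tstar].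

Definition inL (k : nat) (f : T -> R[i]) : Prop := has_ubound (wDf k f).

Definition inL0 (k : nat) (f : T -> R[i]) : Prop :=
  inL k f /\
  forall e : R, 0 < e -> exists N : nat, forall v, v \in Tstar ->
    (N <= depth v)%N -> weight k v * Df f v <= e.

Definition normk (k : nat) (f : T -> R[i]) : R :=
  Normc.normc (f (root T)) + sup (wDf k f).

Inductive lspace := Lk | Lk0.

Definition inspace (X : lspace) (k : nat) (f : T -> R[i]) : Prop :=
  match X with Lk => inL k f | Lk0 => inL0 k f end.

Definition Mult (psi f : T -> R[i]) : T -> R[i] := fun v => psi v * f v.

Definition bounded_mult (X : lspace) (k : nat) (psi : T -> R[i]) : Prop :=
  (forall f, inspace X k f -> inspace X k (Mult psi f)) /\
  exists C : R, forall f, inspace X k f ->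
    normk k (Mult psi f) <= C * normk k f.

Definition bounded_below (X : lspace) (k : nat) (psi : T -> R[i]) : Prop :=
  exists c : R, 0 < c /\ forall f, inspace X k f ->
    c * normk k f <= normk k (Mult psi f).

End Spaces.

(* Main.v *)
Require Import Defs.
From mathcomp Require Import all_boot all_order all_algebra.
From mathcomp Require Import all_classical all_reals all_analysis.
From mathcomp.real_closed Require Import complex.
From mathcomp Require Import ring lra.
Import Order.TTheory GRing.Theory Num.Theory.
Local Open Scope classical_set_scope.
Local Open Scope ring_scope.

Section Aux.
Variables (R : realType) (T : rtree).
Implicit Types (f psi : T -> R[i]) (v : T).

Lemma nD (x y : R[i]) : Normc.normc (x + y) <= Normc.normc x + Normc.normc y.
Proof. exact: le_normcD. Qed.
Lemma nge0 (x : R[i]) : 0 <= Normc.normc x.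
Proof. case: x => a b /=. exact: sqrtr_ge0. Qed.
Lemma nN (x : R[i]) : Normc.normc (-x) = Normc.normc x.
Proof. exact: normcN. Qed.
Lemma nM (x y : R[i]) : Normc.normc (x * y) = Normc.normc x * Normc.normc y.
Proof. exact: Normc.normcM. Qed.

Lemma ell_ge1 j (x : R) : 1 <= x -> 1 <= ell j x.
Proof.
move=> x1; elim: j => [|j IH] //=.
case: j IH => [|j] IH.
  by rewrite lerDl ln_ge0.
by rewrite lerDl ln_ge0.
Qed.

Definition W k (n : nat) : R := n%:R * \prod_(j < k) ell j n%:R.

Lemma weightE k v : weight R k v = W k (depth v).
Proof. by []. Qed.

Lemma prod_ge1 k (n : nat) : (0 < n)%N -> 1 <= \prod_(j < k) ell j n%:R :> R.
Proof.
move=> dp; rewrite -[1 as X in X <= _](@big1 R 1 *%R _ (index_enum 'I_k) xpredT (fun _ => 1)) //.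
apply: ler_prod => j _; rewrite ler01 /=; apply: ell_ge1; by rewrite ler1n.
Qed.

Lemma W_ge0 k n : 0 <= W k n.
Proof.
rewrite /W; case: (posnP n) => [->|dp]; first by rewrite mul0r.
apply: mulr_ge0; first exact: ler0n.
have := prod_ge1 k n dp; apply: le_trans; exact: ler01.
Qed.

Lemma weight_ge0 k v : 0 <= weight R k v.
Proof. exact: W_ge0. Qed.

Lemma weight_gt0 k (v : T) : v <> Defs.root T -> 0 < weight R k v.
Proof.
move=> vr; have dp : (0 < depth v)%N.
  by rewrite lt0n; apply/negP => /eqP/depth0.
rewrite /weight; apply: mulr_gt0; first by rewrite ltr0n.
have := prod_ge1 k (depth v) dp; apply: lt_le_trans; exact: ltr01.
Qed.

Lemma sup_ge0_gen (E : set R) : (forall x, E x -> 0 <= x) -> 0 <= sup E.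
Proof.
move=> H; case: (pselect (has_ubound E)) => hb; last first.
  by rewrite sup_out // => -[].
case: (pselect (E !=set0)) => [[x Ex]|ne].
  exact: le_trans (H x Ex) (ub_le_sup hb Ex).
have -> : E = set0 by apply/seteqP; split=> x // Ex; case: ne; exists x.
by rewrite sup0.
Qed.

Lemma sup_le_bound (E : set R) B : 0 <= B -> (forall x, E x -> x <= B) -> sup E <= B.
Proof.
move=> B0 H; case: (pselect (E !=set0)) => [ne|ne].
  exact: ge_sup.
have -> : E = set0 by apply/seteqP; split=> x // Ex; case: ne; exists x.
by rewrite sup0.
Qed.

Lemma Df_ge0 (f : T -> R[i]) v : 0 <= Df f v.
Proof. exact: nge0. Qed.

Lemma wDf_ge0 k f x : wDf k f x -> 0 <= x.
Proof. by case=> v _ <-; apply: mulr_ge0; [exact: weight_ge0|exact: Df_ge0]. Qed.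

Lemma sup_wDf_ge0 k f : 0 <= sup (wDf k f).
Proof. apply: sup_ge0_gen; exact: wDf_ge0. Qed.

Lemma normk_ge_root k f : Normc.normc (f (Defs.root T)) <= normk k f.
Proof. by rewrite /normk lerDl sup_wDf_ge0. Qed.

Lemma normk_ge_sup k f : sup (wDf k f) <= normk k f.
Proof. by rewrite /normk lerDr nge0. Qed.

Lemma normk_ge0 k f : 0 <= normk k f.
Proof. exact: le_trans (sup_wDf_ge0 k f) (normk_ge_sup k f). Qed.

Lemma wDf_le_sup k f v : inL k f -> v <> Defs.root T ->
  weight R k v * Df f v <= sup (wDf k f).
Proof. by move=> hf vr; apply: (ub_le_sup hf); exists v. Qed.

Lemma wDf_le_normk k f v : inL k f -> v <> Defs.root T ->
  weight R k v * Df f v <= normk k f.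
Proof. by move=> hf vr; apply: le_trans (normk_ge_sup k f); exact: wDf_le_sup. Qed.

Lemma inspace_inL X k (f : T -> R[i]) : inspace X k f -> inL k f.
Proof. by case: X => //= -[]. Qed.

Lemma mk_inspace X k (f : T -> R[i]) : inL k f ->
  (forall e : R, 0 < e -> exists N : nat, forall v, v <> Defs.root T ->
    (N <= depth v)%N -> weight R k v * Df f v <= e) -> inspace X k f.
Proof.
move=> h1 h2; case: X => //=; split => // e e0.
have [N HN] := h2 e e0; exists N => v; rewrite inE => vr; exact: HN.
Qed.


Lemma normk_scale k a f : inL k f ->
  normk k (fun w => a * f w) <= Normc.normc a * normk k f.
Proof.
move=> hf; rewrite /normk nM mulrDr lerD2l.
apply: sup_le_bound; first by apply: mulr_ge0; [exact: nge0|exact: sup_wDf_ge0].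
move=> _ [w wr <-]; rewrite /Df -mulrBr nM mulrCA.
apply: ler_wpM2l; first exact: nge0.
exact: wDf_le_sup.
Qed.

Definition chi v : T -> R[i] := fun w => if pselect (w = v) then 1 else 0.

Lemma Df_chi_le1 v w : Df (chi v) w <= 1.
Proof.
rewrite /Df /chi; case: (pselect (w = v)) => a1 /=; case: (pselect (par w = v)) => a2 /=;
  rewrite ?subrr ?subr0 ?sub0r ?nN ?Normc.normc0 ?Normc.normc1 //.
all: rewrite ?sqrrN ?expr0n ?expr1n /= ?addr0 ?sqrtr0 ?sqrtr1 ?ler01 //.
Qed.

Lemma Df_chi0 v w : w <> v -> (@par T) w <> v -> Df (chi v) w = 0.
Proof.
move=> h1 h2; rewrite /Df /chi; case: (pselect (w = v)) => // a1; case: (pselect (par w = v)) => // a2.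
by rewrite subrr Normc.normc0.
Qed.

Lemma par_neq v : v <> Defs.root T -> par v <> v.
Proof.
move=> vr e; have := depth_par vr; rewrite e => h.
by move: (leqnn (depth v).+1); rewrite {2}h ltnn.
Qed.

Lemma chi_in X k v : inspace X k (chi v).
Proof.
apply: mk_inspace.
  exists (W k (depth v) + W k (depth v).+1) => _ [w wr <-].
  case: (pselect (w = v)) => [->|wv].
    apply: le_trans (_ : W k (depth v) <= _); last by rewrite lerDl W_ge0.
    rewrite weightE -[X in _ <= X]mulr1; apply: ler_wpM2l; [exact: W_ge0|exact: Df_chi_le1].
  case: (pselect (par w = v)) => [pv|pv].
    apply: le_trans (_ : W k (depth v).+1 <= _); last by rewrite lerDr W_ge0.
    rewrite weightE -(depth_par wr) pv.
    rewrite -[X in _ <= X]mulr1; apply: ler_wpM2l; [exact: W_ge0|exact: Df_chi_le1].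
  rewrite Df_chi0 // mulr0; apply: addr_ge0; exact: W_ge0.
move=> e e0; exists (depth v).+2 => w wr dw.
rewrite Df_chi0 ?mulr0 ?(ltW e0) //.
  by move=> wv; move: dw; rewrite wv => /ltnW; rewrite ltnn.
move=> pv; move: dw; rewrite -(depth_par wr) pv ltnS ltnn //.
Qed.

Lemma normk_chi_gt0 k v : 0 < normk k (chi v).
Proof.
case: (pselect (v = Defs.root T)) => [->|vr].
  apply: lt_le_trans (normk_ge_root k _).
  rewrite /chi; case: pselect => // a1; rewrite Normc.normc1 //.
apply: lt_le_trans (wDf_le_normk k (chi v) v (inspace_inL Lk k (chi v) (chi_in Lk k v)) vr).
apply: mulr_gt0; first exact: weight_gt0.
rewrite /Df /chi; case: (pselect (v = v)) => // a1.
case: (pselect (par v = v)) => [/par_neq//|a2].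
rewrite subr0 Normc.normc1 //.
Qed.

Lemma Mult_chi psi v : Mult psi (chi v) = fun w => psi v * chi v w.
Proof.
apply: funext => w; rewrite /Mult /chi; case: pselect => [e|a] /=; [by rewrite e | by rewrite !mulr0].
Qed.

Lemma dir1 X k psi : bounded_below X k psi ->
  0 < inf [set Normc.normc (psi v) | v in [set: T]].
Proof.
move=> [c [c0 H]]; apply: lt_le_trans c0 _; apply: lb_le_inf.
  by exists (Normc.normc (psi (Defs.root T))); exists (Defs.root T).
move=> _ [v _ <-].
have := H (chi v) (chi_in X k v); rewrite Mult_chi => h.
have h2 := le_trans h (normk_scale k (psi v) (chi v) (inspace_inL X k (chi v) (chi_in X k v))).
by rewrite ler_pM2r ?normk_chi_gt0 in h2.
Qed.


Lemma depth_iter w j : (j <= depth w)%N -> depth (iter j (@par T) w) = (depth w - j)%N.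
Proof.
elim: j => [|j IH] hj; first by rewrite subn0.
have IH' := IH (ltnW hj).
have xr : iter j (@par T) w <> Defs.root T.
  move=> e; move: IH'; rewrite e depth_root => /esym/eqP; rewrite subn_eq0.
  by rewrite leqNgt hj.
rewrite iterS subnS -IH' -(depth_par xr) //.
Qed.

Definition trunc n g : T -> R[i] := fun w => g (iter (depth w - n) (@par T) w).

Lemma trunc_le n g w : (depth w <= n)%N -> trunc n g w = g w.
Proof. by rewrite /trunc -subn_eq0 => /eqP ->. Qed.

Lemma trunc_par n g w : w <> Defs.root T -> (n < depth w)%N ->
  trunc n g (par w) = trunc n g w.
Proof.
move=> wr hn; have h := depth_par wr.
rewrite /trunc; have -> : (depth w - n = (depth (par w) - n).+1)%N.
  by rewrite -h subSn // -ltnS h.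
by rewrite (iterSr _ (@par T)).
Qed.

Lemma Df_trunc_le n g w : w <> Defs.root T -> Df (trunc n g) w <= Df g w.
Proof.
move=> wr; have h := depth_par wr.
case: (leqP (depth w) n) => hn.
  rewrite /Df trunc_le // trunc_le //.
  by apply: leq_trans hn; rewrite -h.
by rewrite /Df trunc_par // subrr Normc.normc0 Df_ge0.
Qed.

Lemma wDf_trunc_le k n g w : w <> Defs.root T ->
  weight R k w * Df (trunc n g) w <= weight R k w * Df g w.
Proof. by move=> wr; apply: ler_wpM2l; [exact: weight_ge0|exact: Df_trunc_le]. Qed.

Lemma trunc_in X k n g : inspace X k g -> inspace X k (trunc n g).
Proof.
have hL : inL k g -> inL k (trunc n g).
  move=> [M hM]; exists M => _ [w wr <-].
  apply: le_trans (wDf_trunc_le k n g w wr) _; apply: hM; by exists w.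
case: X => /=; first exact: hL.
move=> [h1 h2]; split; first exact: hL.
move=> e e0; have [N HN] := h2 e e0; exists N => w wT dw.
apply: le_trans (HN w wT dw).
by apply: wDf_trunc_le; move: wT; rewrite inE.
Qed.

Lemma normk_trunc k n g : inL k g -> normk k (trunc n g) <= normk k g.
Proof.
move=> hg; rewrite /normk trunc_le ?depth_root // lerD2l.
apply: sup_le_bound; first exact: sup_wDf_ge0.
move=> _ [w wr <-]; apply: le_trans (wDf_trunc_le k n g w wr) _.
exact: wDf_le_sup.
Qed.

Lemma key X k psi C g v :
  (forall f, inspace X k f -> inspace X k (Mult psi f)) ->
  (forall f, inspace X k f -> normk k (Mult psi f) <= C * normk k f) ->
  inspace X k g -> v <> Defs.root T ->
  weight R k v * (Normc.normc (g (par v)) * Df psi v) <= Num.max C 0 * normk k g.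
Proof.
move=> Hmap HC hg vr.
set n := depth (par v); set h := trunc n g.
have hv : (n < depth v)%N by rewrite /n -(depth_par vr).
have hh : inspace X k h := trunc_in X k n g hg.
have e : Df (Mult psi h) v = Normc.normc (g (par v)) * Df psi v.
  rewrite /Df /Mult /h -(trunc_par n g v vr hv) (trunc_le n g (par v)) //.
  by rewrite -mulrBl nM mulrC.
rewrite -e; apply: le_trans (wDf_le_normk k _ v (inspace_inL X k _ (Hmap h hh)) vr) _.
apply: le_trans (HC h hh) _.
apply: le_trans (_ : Num.max C 0 * normk k h <= _).
  by apply: ler_wpM2r; [exact: normk_ge0|rewrite le_max lexx].
apply: ler_wpM2l; first by rewrite le_max lexx orbT.
exact: normk_trunc (inspace_inL X k g hg).
Qed.

Lemma pointwise psi f (m : R) w : 0 <= m -> (forall v, m <= Normc.normc (psi v)) ->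
  m ^+ 2 * Df f w <= m * Df (Mult psi f) w
     + Normc.normc (Mult psi f (par w)) * Df psi w.
Proof.
move=> m0 hm.
have h1 : Normc.normc (psi w) * Df f w <=
    Df (Mult psi f) w + Normc.normc (f (par w)) * Df psi w.
  rewrite /Df -nM.
  have -> : psi w * (f w - f (par w)) = (Mult psi f w - Mult psi f (par w))
      - f (par w) * (psi w - psi (par w)) by rewrite /Mult; ring.
  by apply: le_trans (nD _ _) _; rewrite nN nM.
have h3 : m * Normc.normc (f (par w)) <= Normc.normc (Mult psi f (par w)).
  by rewrite /Mult nM; apply: ler_wpM2r; [exact: nge0|exact: hm].
have e1 : 0 <= m * ((Normc.normc (psi w) - m) * Df f w).
  by apply: mulr_ge0 => //; apply: mulr_ge0; [rewrite subr_ge0|exact: Df_ge0].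
have e2 : 0 <= m * (Df (Mult psi f) w + Normc.normc (f (par w)) * Df psi w
                    - Normc.normc (psi w) * Df f w).
  by apply: mulr_ge0 => //; rewrite subr_ge0.
have e3 : 0 <= (Normc.normc (Mult psi f (par w)) - m * Normc.normc (f (par w))) * Df psi w.
  by apply: mulr_ge0; [rewrite subr_ge0|exact: Df_ge0].
nra.
Qed.


Lemma dir2 X k psi : bounded_mult X k psi ->
  0 < inf [set Normc.normc (psi v) | v in [set: T]] -> bounded_below X k psi.
Proof.
move=> [Hmap [C HC]] m0.
set m := inf _ in m0.
have hm : forall v, m <= Normc.normc (psi v).
  move=> v; apply: ge_inf; last by exists v.
  by exists 0 => _ [w _ <-]; exact: nge0.
set C' := Num.max C 0.
have C'0 : 0 <= C' by rewrite le_max lexx orbT.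
have den0 : 0 < 2 * m + C'.
  by apply: ltr_wpDr => //; apply: mulr_gt0.
exists (m ^+ 2 / (2 * m + C')); split.
  by apply: divr_gt0 => //; apply: exprn_gt0.
move=> f hf; set g := Mult psi f.
have hg := Hmap f hf.
have ng0 := normk_ge0 k g.
rewrite mulrAC ler_pdivrMr //.
have hA : m * Normc.normc (f (Defs.root T)) <= normk k g.
  apply: le_trans (normk_ge_root k g).
  by rewrite /g /Mult nM; apply: ler_wpM2r; [exact: nge0|exact: hm].
have hB : sup (wDf k f) <= (m ^+ 2)^-1 * ((m + C') * normk k g).
  apply: sup_le_bound.
    apply: mulr_ge0; first by rewrite invr_ge0 exprn_ge0 // ltW.
    by apply: mulr_ge0 => //; apply: addr_ge0 => //; exact: ltW.
  move=> _ [w wr <-]; rewrite ler_pdivlMl; last exact: exprn_gt0.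
  have hp := pointwise psi f m w (ltW m0) hm.
  have hk := key X k psi C g w Hmap HC hg wr.
  have hq : weight R k w * Df g w <= normk k g.
    exact: wDf_le_normk k g w (inspace_inL X k g hg) wr.
  have hw := weight_ge0 k w.
  have hp' := ler_wpM2l hw hp.
  rewrite -/g in hp' hk.
  have e4 : 0 <= m * (normk k g - weight R k w * Df g w).
    by apply: mulr_ge0; [exact: ltW|rewrite subr_ge0].
  rewrite mulrDr in hp'.
  rewrite -/C' in hk. nra.
rewrite ler_pdivlMl in hB; last exact: exprn_gt0.
rewrite /normk mulrDr.
have e5 : 0 <= m * (normk k g - m * Normc.normc (f (Defs.root T))).
  by apply: mulr_ge0; [exact: ltW|rewrite subr_ge0].
rewrite -/(normk k g).
nra.
Qed.

End Aux.

Theorem theorem4p4 (R : realType) (T : rtree) (k : nat) (X : lspace)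
  (psi : T -> R[i]) :
  bounded_mult X k psi ->
  (bounded_below X k psi <->
   0 < inf [set Normc.normc (psi v) | v in [set: T]]).
Proof.
move=> hb; split; first exact: dir1.
exact: dir2.
Qed.
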